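(* Let $\mathcal{P}$ be the powerset monad (unit $x\mapsto\{x\}$, multiplication union), $\mathcal{V}=[0,1]_\oplus$ and $\mathit{ev}_{\mathcal{P}}=\sup\colon\mathcal{P}[0,1]\to[0,1]$ (with $\sup\emptyset=0$). For sets $X_1,X_2$ define $g_{X_1,X_2}\colon\mathcal{P}(X_1+X_2)\to\mathcal{P}X_1+\mathcal{P}X_2$ by $g_{X_1,X_2}(X')=X'\cap X_1$ (in the left summand) if $X'\cap X_1\neq\emptyset$, and $g_{X_1,X_2}(X')=X'$ (in the right summand, as then $X'\subseteq X_2$) otherwise. Then $g$ is a natural transformation that is compatible with the unit and the multiplication of $\mathcal{P}$ and is well-behaved with respect to $\sup$.
   Context: $[0,1]_\oplus$ is the quantale on $[0,1]$ with the reversed order ($a\sqsubseteq b$ iff $a\ge b$) and truncated addition $a\oplus b=\min(a+b,1)$; hence its top element is $\top=0$ and its bottom is $\bot=1$. For a monad $(T,\eta,\mu)$, a natural transformation $g\colon T((-)+(-))\Rightarrow T(-)+T(-)$ is compatible with the unit if $g_{Y_1,Y_2}\circ\eta_{Y_1+Y_2}=\eta_{Y_1}+\eta_{Y_2}$, and with the multiplication if $g_{Y_1,Y_2}\circ\mu_{Y_1+Y_2}=(\mu_{Y_1}+\mu_{Y_2})\circ g_{TY_1,TY_2}\circ Tg_{Y_1,Y_2}$, for all sets $Y_1,Y_2$. It is well-behaved with respect to $\mathit{ev}_T\colon T\mathcal{V}\to\mathcal{V}$ if for all sets $X_1,X_2$ and maps $f_i\colon X_i\to\mathcal{V}$: $\mathit{ev}_T\circ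 T[f_1,\top_{X_2}]=[\mathit{ev}_T\circ Tf_1,\top_{TX_2}]\circ g_{X_1,X_2}$, $\mathit{ev}_T\circ T[\bot_{X_1},f_2]=[\bot_{TX_1},\mathit{ev}_T\circ Tf_2]\circ g_{X_1,X_2}$, and $\mathit{ev}_T\circ T[\bot_{X_1},\top_{X_2}]=[\bot_{TX_1},\top_{TX_2}]\circ g_{X_1,X_2}$, where $\top_Z,\bot_Z$ are constant maps on $Z$ with values $\top,\bot$ of the quantale. *)

(* Defs.v *)
From HB Require Import structures.
From mathcomp Require Import all_boot all_order all_algebra.
From mathcomp Require Import boolp classical_sets reals.
Set Implicit Arguments. Unset Strict Implicit. Unset Printing Implicit Defensive.
Import Order.TTheory GRing.Theory Num.Theory.
Local Open Scope ring_scope.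
Local Open Scope classical_set_scope.

Definition Pmap (X Y : Type) (f : X -> Y) (A : set X) : set Y := f @` A.
Definition Peta (X : Type) (x : X) : set X := [set x].
Definition Pmu (X : Type) (A : set (set X)) : set X := \bigcup_(B in A) B.

Definition copair (X1 X2 Y : Type) (f1 : X1 -> Y) (f2 : X2 -> Y)
  (s : X1 + X2) : Y :=
  match s with inl x => f1 x | inr y => f2 y end.
Definition summap (X1 X2 Y1 Y2 : Type) (f1 : X1 -> Y1) (f2 : X2 -> Y2)
  (s : X1 + X2) : Y1 + Y2 :=
  match s with inl x => inl (f1 x) | inr y => inr (f2 y) end.

Definition gP (X1 X2 : Type) (A : set (X1 + X2)) : set X1 + set X2 :=
  if pselect (exists x, A (inl x))
  then inl [set x | A (inl x)]
  else inr [set y | A (inr y)].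

Definition V (R : realType) := {x : R | (0 <= x)%R && (x <= 1)%R}.
(* top = 0, bottom = 1 (reversed order) *)
Lemma zero_in01 (R : realType) : (0 : R) <= (0 : R) <= (1 : R).
Proof. by rewrite lexx ler01. Qed.
Lemma one_in01 (R : realType) : (0 : R) <= (1 : R) <= (1 : R).
Proof. by rewrite lexx ler01. Qed.
Definition topV (R : realType) : V R := exist _ 0 (zero_in01 R).
Definition botV (R : realType) : V R := exist _ 1 (one_in01 R).

Lemma sup_in01 (R : realType) (A : set (V R)) :
  0 <= sup ((@proj1_sig _ _) @` A) <= 1.
Proof.
set S := (@proj1_sig _ _) @` A.
have [[a Sa]|S0] := pselect (exists a, S a); last first.
  have -> : S = set0 by apply/seteqP; split=> x // Sx; apply: S0; exists x.
  by rewrite sup0 lexx ler01.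
have ub : ubound S 1 by move=> _ [[x xin] _ <-]; by case/andP: (xin).
have hs : has_sup S by split; [exists a | exists 1].
apply/andP; split.
  have a0 : 0 <= a by case: Sa => -[x xin] _ <-; by case/andP: (xin).
  apply: le_trans a0 _; apply: sup_ubound => //; by case: hs.
by apply: ge_sup => //; exists a.
Qed.

(* ev_P = sup : P[0,1] -> [0,1], with sup of the empty set = 0 *)
Definition evP (R : realType) (A : set (V R)) : V R :=
  exist _ (sup ((@proj1_sig _ _) @` A)) (sup_in01 A).

(* Main.v *)
Require Import Defs.
From mathcomp Require Import all_boot all_order all_algebra.
From mathcomp Require Import boolp classical_sets reals.
Import Order.TTheory GRing.Theory Num.Theory.
Local Open Scope ring_scope.
Local Open Scope classical_set_scope.

Section H.
Variable R : realType.

Lemma Vext (a b : V R) : proj1_sig a = proj1_sig b -> a = b.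
Proof.
case: a b => [a ha] [b hb] /= e; subst; congr exist; exact: bool_irrelevance.
Qed.

Lemma ubV (A : set (V R)) : ubound ((@proj1_sig _ _) @` A) 1.
Proof. by move=> _ [[x xin] _ <-]; case/andP: (xin). Qed.

Lemma geV (v : V R) : 0 <= proj1_sig v.
Proof. by case: v => x p /=; case/andP: p. Qed.

Lemma sup_cmp (S T : set R) : ubound S 1 -> ubound T 1 ->
  (forall x, S x -> exists2 y, T y & x <= y) -> (exists x, S x) ->
  sup S <= sup T.
Proof.
move=> uS uT h [x Sx]; apply: ge_sup; first by exists x.
move=> z Sz; have [y Ty zy] := h z Sz; apply: le_trans zy _.
by apply: ub_le_sup => //; exists 1.
Qed.

Lemma sup_zero (S : set R) : S `<=` [set 0] -> sup S = 0.
Proof.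
move=> h; have [[a Sa]|S0] := pselect (exists a, S a).
  have -> : S = [set 0]; last exact: sup1.
  apply/seteqP; split => // z ->; by rewrite -(h a Sa).
have -> : S = set0 by apply/seteqP; split=> x // Sx; apply: S0; exists x.
exact: sup0.
Qed.

Lemma sup_one (S : set R) : S 1 -> ubound S 1 -> sup S = 1.
Proof.
move=> S1 u; apply/le_anti/andP; split; first by apply: ge_sup => //; exists 1.
by apply: ub_le_sup => //; exists 1.
Qed.

End H.

Lemma gPl (X1 X2 : Type) (B : set (X1 + X2)) : (exists x, B (inl x)) ->
    gP B = inl [set x | B (inl x)].
Proof. by move=> h; rewrite /gP; case: pselect. Qed.
Lemma gPr (X1 X2 : Type) (B : set (X1 + X2)) : ~ (exists x, B (inl x)) ->
    gP B = inr [set y | B (inr y)].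
Proof. by move=> h; rewrite /gP; case: pselect. Qed.


Theorem mainTheorem12 (R : realType) :
  (* naturality *)
  (forall (X1 X2 Y1 Y2 : Type) (h1 : X1 -> Y1) (h2 : X2 -> Y2)
          (A : set (X1 + X2)),
      gP (Pmap (summap h1 h2) A) = summap (Pmap h1) (Pmap h2) (gP A)) /\
  (* compatibility with the unit *)
  (forall (Y1 Y2 : Type) (s : Y1 + Y2),
      gP (Peta s) = summap (@Peta Y1) (@Peta Y2) s) /\
  (* compatibility with the multiplication *)
  (forall (Y1 Y2 : Type) (A : set (set (Y1 + Y2))),
      gP (Pmu A) = summap (@Pmu Y1) (@Pmu Y2) (gP (Pmap (@gP Y1 Y2) A))) /\
  (* well-behavedness with respect to ev_P = sup *)
  (forall (X1 X2 : Type) (f1 : X1 -> V R) (f2 : X2 -> V R),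
     (forall A : set (X1 + X2),
        evP (Pmap (copair f1 (fun _ => topV R)) A)
        = copair (fun B => evP (Pmap f1 B)) (fun _ => topV R) (gP A)) /\
     (forall A : set (X1 + X2),
        evP (Pmap (copair (fun _ => botV R) f2) A)
        = copair (fun _ => botV R) (fun B => evP (Pmap f2 B)) (gP A)) /\
     (forall A : set (X1 + X2),
        evP (Pmap (copair (fun _ => botV R) (fun _ => topV R)) A)
        = copair (fun _ : set X1 => botV R) (fun _ : set X2 => topV R) (gP A))).
Proof.
split.
  move=> X1 X2 Y1 Y2 h1 h2 A; rewrite /gP /Pmap.
  case: pselect => [[y [s As hs]]|N1]; case: pselect => [[x Ax]|N2] /=.
  - congr inl; apply/seteqP; split.
      move=> z [[a|b] Aa] /= e; last by [].
      by case: e => <-; exists a.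
    by move=> _ [a Aa <-]; exists (inl a).
  - by case: s As hs => // a Aa _; exfalso; apply: N2; exists a.
  - by exfalso; apply: N1; exists (h1 x); exists (inl x).
  - congr inr; apply/seteqP; split.
      move=> z [[a|b] Aa] /= e; first by exfalso; apply: N2; exists a.
      by case: e => <-; exists b.
    by move=> _ [a Aa <-]; exists (inr a).
split.
  move=> Y1 Y2 s; rewrite /gP /Peta.
  case: s => [a|b]; case: pselect => [[x e]|N] /=.
  - by congr inl; apply/seteqP; split => z /=; [move=> [->] | move=> ->].
  - by exfalso; apply: N; exists a.
  - discriminate e.
  - by congr inr; apply/seteqP; split => z /=; [move=> [->] | move=> ->].
split.
  move=> Y1 Y2 A; rewrite /Pmu /Pmap.
  case: (pselect (exists x, (\bigcup_(B in A) B) (inl x))) => [h|h].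
  - rewrite (@gPl _ _ _ h).
    have h' : exists x, ((@gP Y1 Y2) @` A) (inl x).
      case: h => x [B AB Bx]; exists [set x | B (inl x)]; exists B => //.
      by apply: gPl; exists x.
    rewrite (@gPl _ _ _ h') /=; congr inl; apply/seteqP; split.
      move=> x [B AB Bx]; exists [set x | B (inl x)] => //.
      by exists B => //; rewrite gPl //; exists x.
    move=> x [C [B AB gB] Cx] /=.
    case: (pselect (exists x, B (inl x))) => hB.
      by move: gB; rewrite gPl // => -[eC]; exists B => //; by rewrite -eC in Cx.
    by move: gB; rewrite gPr.
  - rewrite (@gPr _ _ _ h).
    have h' : ~ exists x, ((@gP Y1 Y2) @` A) (inl x).
      case=> x [B AB]; rewrite gPr //.
      by case=> y By; apply: h; exists y; exists B.
    rewrite (@gPr _ _ _ h') /=; congr inr; apply/seteqP; split.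
      move=> y [B AB By]; exists [set y | B (inr y)] => //; exists B => //.
      by rewrite gPr // => -[z Bz]; apply: h; exists z; exists B.
    move=> y [C [B AB]]; rewrite gPr; last first.
      by case=> z Bz; apply: h; exists z; exists B.
    by case=> <- Cy; exists B.
move=> X1 X2 f1 f2.
split; last split.
- move=> A; apply: Vext; rewrite /evP /Pmap /=.
  case: (pselect (exists x, A (inl x))) => h.
    rewrite gPl //=; case: h => x0 Ax0.
    apply/le_anti/andP; split; apply: sup_cmp; try exact: ubV.
    + move=> _ [v [[a|b] Aab <-] <-].
        by exists (proj1_sig (f1 a)) => //; exists (f1 a) => //; exists a.
      by exists (proj1_sig (f1 x0)); [exists (f1 x0) => //; exists x0 | exact: geV].
    + by exists (proj1_sig (f1 x0)); exists (f1 x0) => //; exists (inl x0).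
    + move=> _ [v [a Aa <-] <-].
      by exists (proj1_sig (f1 a)) => //; exists (f1 a) => //; exists (inl a).
    + by exists (proj1_sig (f1 x0)); exists (f1 x0) => //; exists x0.
  rewrite gPr //=; apply: sup_zero => _ [v [[a|b] Aab <-] <-] //.
  by exfalso; apply: h; exists a.
- move=> A; apply: Vext; rewrite /evP /Pmap /=.
  case: (pselect (exists x, A (inl x))) => h.
    rewrite gPl //=; case: h => x0 Ax0; apply: sup_one; last exact: ubV.
    by exists (botV R) => //; exists (inl x0).
  rewrite gPr //=; congr sup; apply/seteqP; split.
    move=> _ [v [[a|b] Aab <-] <-]; first by exfalso; apply: h; exists a.
    by exists (f2 b) => //; exists b.
  by move=> _ [v [b Ab <-] <-]; exists (f2 b) => //; exists (inr b).
- move=> A; apply: Vext; rewrite /evP /Pmap /=.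
  case: (pselect (exists x, A (inl x))) => h.
    rewrite gPl //=; case: h => x0 Ax0; apply: sup_one; last exact: ubV.
    by exists (botV R) => //; exists (inl x0).
  rewrite gPr //=; apply: sup_zero => _ [v [[a|b] Aab <-] <-] //.
  by exfalso; apply: h; exists a.
Qed.
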